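(* Let $H$ be a complex Hilbert space, let $P \in \mathcal{L}(H)$ be a positive operator (i.e. $\langle Px,x\rangle \ge 0$ for all $x\in H$), and let $(p_n)$ be a sequence of polynomials with positive coefficients such that $p_n(P) \to S$ in the operator norm of $\mathcal{L}(H)$, for some $S \in \mathcal{L}(H)$. If $P$ satisfies the property $\mathcal{N}$, then $S$ satisfies the property $\mathcal{N}$.
   Context: $\mathcal{L}(H)$ is the Banach algebra of bounded linear operators on $H$ with the operator norm; for a polynomial $p(t) = \sum_{k=0}^m \alpha_k t^k$, $p(P) = \sum_{k=0}^m \alpha_k P^k$ with $P^0 = I$. An operator $T \in \mathcal{L}(H)$ satisfies the property $\mathcal{N}$ if there exists $x_0 \in H$ with $\|x_0\|=1$ and $\|Tx_0\| = \|T\|$. *)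

(* Defs.v *)
From HB Require Import structures.
From mathcomp Require Import all_boot all_order all_algebra.
From mathcomp Require Import complex.
From mathcomp Require Import all_classical all_reals.
Set Implicit Arguments. Unset Strict Implicit. Unset Printing Implicit Defensive.
Import Order.TTheory GRing.Theory Num.Theory.
Local Open Scope ring_scope.
Local Open Scope classical_set_scope.

Definition ip_norm (R : realType) (H : lmodType R[i]) (ip : H -> H -> R[i])
  (x : H) : R := Num.sqrt (complex.Re (ip x x)).

Record hilbert (R : realType) (H : lmodType R[i]) := Hilbert {
  inner : H -> H -> R[i];
  innerDZl : forall (a : R[i]) (x y z : H),
      inner (a *: x + y) z = a * inner x z + inner y z;
  inner_conj : forall x y : H, inner y x = Num.conj (inner x y);
  inner_ge0 : forall x : H, 0 <= inner x x;
  inner_eq0 : forall x : H, inner x x = 0 -> x = 0;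
  inner_complete : forall u : nat -> H,
      (forall e : R, 0 < e -> exists N : nat, forall m n : nat,
          (N <= m)%N -> (N <= n)%N -> ip_norm inner (u m - u n) < e) ->
      exists l : H, forall e : R, 0 < e -> exists N : nat, forall n : nat,
          (N <= n)%N -> ip_norm inner (u n - l) < e
}.

Section Ops.
Variables (R : realType) (H : lmodType R[i]) (hs : hilbert H).

Definition hnorm (x : H) : R := ip_norm (inner hs) x.

Definition bounded_linear (T : H -> H) : Prop :=
  (forall (a : R[i]) (x y : H), T (a *: x + y) = a *: T x + T y) /\
  exists M : R, forall x : H, hnorm (T x) <= M * hnorm x.

Definition opnorm (T : H -> H) : R :=
  sup [set hnorm (T x) | x in [set x : H | hnorm x <= 1]].

Definition property_N (T : H -> H) : Prop :=
  exists x0 : H, hnorm x0 = 1 /\ hnorm (T x0) = opnorm T.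

Definition positive_op (P : H -> H) : Prop :=
  forall x : H, 0 <= inner hs (P x) x.

Definition poly_op (p : {poly R[i]}) (T : H -> H) : H -> H :=
  fun x => \sum_(k < size p) p`_k *: iter k T x.
End Ops.

(* Main.v *)
Require Import Defs.
From HB Require Import structures.
From mathcomp Require Import all_boot all_order all_algebra.
From mathcomp Require Import complex.
From mathcomp Require Import all_classical all_reals.
From mathcomp Require Import ring lra.
Import Order.TTheory GRing.Theory Num.Theory.
Local Open Scope ring_scope.

Section Aux.
Context {R : realType} {H : lmodType R[i]} {hs : hilbert H}.
Local Notation ip := (inner hs).
Local Notation rc := (real_complex R).
Local Notation hn := (hnorm hs).

Lemma ip0l z : ip 0 z = 0.
Proof.
have := innerDZl hs 1 0 0 z; rewrite !scale1r addr0 mul1r.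
by rewrite -{1}[ip 0 z]addr0 => /addrI <-.
Qed.
Lemma ipD x y z : ip (x + y) z = ip x z + ip y z.
Proof. by have := innerDZl hs 1 x y z; rewrite scale1r mul1r. Qed.
Lemma ipZ a x z : ip (a *: x) z = a * ip x z.
Proof. by have := innerDZl hs a x 0 z; rewrite !addr0 ip0l addr0. Qed.
Lemma ipC x y : ip y x = (ip x y)^*.
Proof. exact: inner_conj. Qed.
Lemma ipDr z x y : ip z (x + y) = ip z x + ip z y.
Proof. by rewrite ipC ipD rmorphD; congr (_ + _); apply/esym/ipC. Qed.
Lemma ipZr z a x : ip z (a *: x) = a^* * ip z x.
Proof. by rewrite ipC ipZ rmorphM; congr (_ * _); apply/esym/ipC. Qed.
Lemma ip0r z : ip z 0 = 0.
Proof. by rewrite ipC ip0l rmorph0. Qed.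
Lemma ipxxE x : ip x x = rc (complex.Re (ip x x)).
Proof. by rewrite RRe_real // ger0_real // inner_ge0. Qed.
Lemma Re_ge0 x : 0 <= complex.Re (ip x x).
Proof. by rewrite -ler0c -ipxxE inner_ge0. Qed.
Lemma Re_rc (t : R) : complex.Re (rc t) = t. Proof. by []. Qed.
Lemma conj_rc (t : R) : (rc t)^* = rc t. Proof. exact: conjc_real. Qed.
Lemma ge0_rc (c : R[i]) : 0 <= c -> c = rc (complex.Re c).
Proof. by move=> h; rewrite RRe_real ?ger0_real. Qed.
Lemma Re_ge0c (c : R[i]) : 0 <= c -> 0 <= complex.Re c.
Proof. by move=> h; rewrite -ler0c -ge0_rc. Qed.

Arguments ge0_rc {c}. Arguments Re_ge0c {c}.
Lemma hnormE x : hn x = Num.sqrt (complex.Re (ip x x)). Proof. by []. Qed.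
Lemma hnorm_ge0 x : 0 <= hn x. Proof. exact: sqrtr_ge0. Qed.
Lemma hnorm_sq x : hn x ^+ 2 = complex.Re (ip x x).
Proof. by rewrite sqr_sqrtr // Re_ge0. Qed.
Lemma hnorm_eq0 x : hn x = 0 -> x = 0.
Proof.
move=> /eqP; rewrite sqrtr_eq0 => h; apply: (@inner_eq0 _ _ hs).
rewrite ipxxE; have -> : complex.Re (ip x x) = 0 by apply/le_anti; rewrite h Re_ge0.
by rewrite rmorph0.
Qed.
Arguments hnorm_eq0 {x}.
Lemma hnorm0 : hn 0 = 0.
Proof. by rewrite hnormE ip0l sqrtr0. Qed.

Lemma ip_expand x y (t : R) :
  ip (x + rc t *: y) (x + rc t *: y) =
  rc (complex.Re (ip x x) + 2 * t * complex.Re (ip x y) + t ^+ 2 * complex.Re (ip y y)).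
Proof.
rewrite !ipD !ipDr !ipZ !ipZr !conj_rc [ip y x]ipC [ip x x]ipxxE [ip y y]ipxxE.
move: (ip x y) (complex.Re (ip x x)) (complex.Re (ip y y)) => [w1 w2] a c.
apply/eqP; rewrite eq_complex /=; apply/andP; split; apply/eqP; ring.
Qed.

Lemma CS x y : complex.Re (ip x y) ^+ 2 <= complex.Re (ip x x) * complex.Re (ip y y).
Proof.
have hf t : 0 <= complex.Re (ip x x) + 2 * t * complex.Re (ip x y) + t ^+ 2 * complex.Re (ip y y).
  by rewrite -ler0c -ip_expand inner_ge0.
have c0 := Re_ge0 y.
move: hf c0; set a := complex.Re (ip x x); set c := complex.Re (ip y y).
have [c00|cpos] := eqVneq c 0.
  have y0 : y = 0 by apply: hnorm_eq0; rewrite hnormE -/c c00 sqrtr0.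
  by rewrite c00 y0 ip0r /= expr0n /= mulr0.
set b := complex.Re (ip x y) => hf c0.
have cg : 0 < c by rewrite lt_def cpos c0.
have := hf (- b / c).
have -> : a + 2 * (- b / c) * b + (- b / c) ^+ 2 * c = (a * c - b ^+ 2) / c by field.
by rewrite pmulr_lge0 ?invr_gt0 // subr_ge0.
Qed.

Lemma hnormD x y : hn (x + y) <= hn x + hn y.
Proof.
have e := ip_expand x y 1; rewrite rmorph1 scale1r in e.
have hb : complex.Re (ip x y) <= hn x * hn y.
  apply: le_trans (ler_norm _) _.
  rewrite -ler_sqr ?nnegrE ?mulr_ge0 ?hnorm_ge0 //.
  by rewrite real_normK ?num_real // exprMn !hnorm_sq CS.
rewrite -ler_sqr ?nnegrE ?addr_ge0 ?hnorm_ge0 //.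
rewrite hnorm_sq e Re_rc -!hnorm_sq.
have -> : (hn x + hn y) ^+ 2 = hn x ^+ 2 + 2 * (hn x * hn y) + hn y ^+ 2 by ring.
lra.
Qed.

Lemma hnormZ (t : R) x : hn (rc t *: x) = `|t| * hn x.
Proof.
rewrite !hnormE ipZ ipZr conj_rc mulrA -rmorphM [ip x x]ipxxE -rmorphM Re_rc.
by rewrite !Re_rc -expr2 sqrtrM ?sqr_ge0 // sqrtr_sqr.
Qed.
Lemma hnormN x : hn (- x) = hn x.
Proof. by rewrite -scaleN1r -(rmorphN1 rc) hnormZ normrN1 mul1r. Qed.

Lemma hnorm_sum n (F : 'I_n -> H) : hn (\sum_(k < n) F k) <= \sum_(k < n) hn (F k).
Proof.
elim: n F => [|n IH] F; first by rewrite !big_ord0 hnorm0.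
rewrite !big_ord_recr /=; apply: le_trans (hnormD _ _) _; rewrite lerD2r; exact: IH.
Qed.

Definition islin (T : H -> H) := forall (a : R[i]) (x y : H), T (a *: x + y) = a *: T x + T y.

Lemma lin0 T : islin T -> T 0 = 0.
Proof.
move=> hT; have := hT 1 0 0; rewrite !scale1r !addr0.
by rewrite -{1}[T 0]addr0 => /addrI <-.
Qed.
Lemma linZ T : islin T -> forall a x, T (a *: x) = a *: T x.
Proof. by move=> hT a x; have := hT a x 0; rewrite !addr0 lin0 // addr0. Qed.
Lemma linD T : islin T -> forall x y, T (x + y) = T x + T y.
Proof. by move=> hT x y; have := hT 1 x y; rewrite !scale1r. Qed.
Lemma linN T : islin T -> forall x, T (- x) = - T x.
Proof. by move=> hT x; rewrite -scaleN1r linZ // scaleN1r. Qed.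
Lemma linB T : islin T -> forall x y, T (x - y) = T x - T y.
Proof. by move=> hT x y; rewrite linD // linN. Qed.
Arguments lin0 {T}. Arguments linZ {T}. Arguments linD {T}. Arguments linN {T}. Arguments linB {T}.

Lemma opnorm_ub T M : (forall x, hn x <= 1 -> hn (T x) <= M) ->
  forall x, hn x <= 1 -> hn (T x) <= opnorm hs T.
Proof.
move=> hM x hx; apply: ub_le_sup; last by exists x.
by exists M => _ [y hy <-]; apply: hM.
Qed.

Arguments opnorm_ub {T M}.
Lemma opnorm_le T c : (forall x, hn x <= 1 -> hn (T x) <= c) -> opnorm hs T <= c.
Proof.
move=> h; apply: ge_sup.
  by exists (hn (T 0)); exists 0 => //=; rewrite hnorm0 ler01.
by move=> _ [y hy <-]; apply: h.
Qed.

Lemma opnorm_bound T M : islin T -> (forall x, hn x <= 1 -> hn (T x) <= M) ->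
  forall x, hn (T x) <= opnorm hs T * hn x.
Proof.
move=> hT hM x.
have [h0|hpos] := eqVneq (hn x) 0.
  by rewrite (hnorm_eq0 h0) lin0 // !hnorm0 mulr0.
have hg : 0 < hn x by rewrite lt_def hpos hnorm_ge0.
have := opnorm_ub hM (rc (hn x)^-1 *: x).
rewrite !hnormZ (linZ hT) hnormZ ger0_norm ?invr_ge0 ?hnorm_ge0 // mulVf // lexx.
by move=> /(_ isT); rewrite mulrC ler_pdivrMr.
Qed.

Lemma bl_ball T : bounded_linear hs T -> exists M, forall x, hn x <= 1 -> hn (T x) <= M.
Proof.
move=> [_ [M hM]]; exists `|M| => x hx; apply: le_trans (hM x) _.
apply: le_trans (ler_wpM2r (hnorm_ge0 x) (ler_norm M)) _.
by apply: ler_piMr.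
Qed.


Arguments bl_ball {T}. Arguments opnorm_bound {T M}.
Lemma selfadj P : islin P -> positive_op hs P -> forall x y, ip (P x) y = ip x (P y).
Proof.
move=> hP hpos.
have real v : (ip (P v) v)^* = ip (P v) v by apply: geC0_conj; apply: hpos.
have hg u v : (ip (P u) v)^* + (ip (P v) u)^* = ip (P u) v + ip (P v) u.
  have := real (u + v); rewrite (linD hP) !ipD !ipDr !rmorphD /= (real u) (real v).
  move/eqP; rewrite -subr_eq0 => /eqP h; apply/eqP; rewrite -subr_eq0; apply/eqP.
  by rewrite -[RHS]h; ring.
move=> x y.
have h2 := hg x ('i *: y).
rewrite ipZr (linZ hP) ipZ !rmorphM /= !conjCK !conjCi in h2.
rewrite [ip x (P y)]ipC.
have h1 := hg x y.
move: (ip (P x) y) (ip (P y) x) h1 h2 => a b h1 h2.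
have k : 'i * (a^* - b^* + a - b) = 0.
  move/eqP: h2; rewrite -subr_eq0 => /eqP h2; rewrite -[RHS]h2; ring.
have k' : a^* - b^* + a - b = 0.
  by move/eqP: k; rewrite mulf_eq0 (negPf (neq0Ci _)) /= => /eqP.
have e2 : 2 * (a - b^*) = 0.
  have -> : 2 * (a - b^*) = (a + b - (a^* + b^*)) + (a^* - b^* + a - b) by ring.
  by rewrite h1 k' subrr addr0.
apply/subr0_eq; move/eqP: e2; rewrite mulf_eq0 pnatr_eq0 /= => /eqP //.
Qed.

Arguments selfadj {P}.
Lemma eigen P x0 : bounded_linear hs P -> positive_op hs P -> hn x0 = 1 ->
  hn (P x0) = opnorm hs P -> P x0 = rc (opnorm hs P) *: x0.
Proof.
move=> hPb hpos hx0 hPx0.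
have hP := hPb.1.
have [M hM] := bl_ball hPb.
have hb := opnorm_bound hP hM.
move: hPx0 hb; set l := opnorm hs P => hPx0 hb.
have l0 : 0 <= l by rewrite -hPx0 hnorm_ge0.
have [l00|lpos] := eqVneq l 0.
  by rewrite l00 rmorph0 scale0r; apply: hnorm_eq0; rewrite hPx0 l00.
have lg : 0 < l by rewrite lt_def lpos l0.
have sa := selfadj hP hpos.
have hw : P (P x0) = rc (l ^+ 2) *: x0.
  apply/subr0_eq/hnorm_eq0/eqP.
  have -> : P (P x0) - rc (l ^+ 2) *: x0 = P (P x0) + rc (- l ^+ 2) *: x0.
    by rewrite rmorphN scaleNr.
  rewrite hnormE sqrtr_eq0 ip_expand Re_rc (sa (P x0) x0) -!hnorm_sq hPx0 hx0.
  have h1 : hn (P (P x0)) <= l ^+ 2 by apply: le_trans (hb _) _; rewrite hPx0 expr2.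
  have h2 : hn (P (P x0)) ^+ 2 <= (l ^+ 2) ^+ 2.
    by rewrite ler_sqr ?nnegrE ?hnorm_ge0 ?exprn_ge0.
  have -> : hn (P (P x0)) ^+ 2 + 2 * - l ^+ 2 * l ^+ 2 + (- l ^+ 2) ^+ 2 * 1 ^+ 2 = hn (P (P x0)) ^+ 2 - (l ^+ 2) ^+ 2 by ring.
  lra.
set z := P x0 - rc l *: x0.
have hz : P z = rc (- l) *: z.
  rewrite /z (linB hP) (linZ hP) hw scalerBr scalerA -rmorphM.
  rewrite mulNr -expr2 !rmorphN !scaleNr opprK.
  by rewrite addrC.
have := hpos z; rewrite hz ipZ rmorphN mulNr oppr_ge0 pmulr_rle0 ?ltcR // => hle.
have z0 : z = 0.
  by apply: (@inner_eq0 _ _ hs); apply/le_anti; rewrite hle inner_ge0.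
by apply/subr0_eq.
Qed.

Arguments eigen {P x0}.
Lemma iter_eig P x0 (l : R) : islin P -> P x0 = rc l *: x0 ->
  forall k, iter k P x0 = rc (l ^+ k) *: x0.
Proof.
move=> hP hx; elim=> [|k IH]; first by rewrite expr0 rmorph1 scale1r.
by rewrite iterS IH (linZ hP) hx scalerA -rmorphM -exprSr.
Qed.

Arguments iter_eig {P x0 l}.
Definition pval (p : {poly R[i]}) (l : R) := \sum_(k < size p) complex.Re p`_k * l ^+ k.

Lemma poly_eig (p : {poly R[i]}) P x0 (l : R) : islin P -> P x0 = rc l *: x0 ->
  (forall k, 0 <= p`_k) -> poly_op p P x0 = rc (pval p l) *: x0.
Proof.
move=> hP hx hp; rewrite /poly_op /pval rmorph_sum scaler_suml; apply: eq_bigr => k _.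
by rewrite (iter_eig hP hx) scalerA rmorphM /= -(ge0_rc (hp k)).
Qed.

Arguments poly_eig {p P x0 l}.
Lemma pval_ge0 (p : {poly R[i]}) (l : R) : 0 <= l -> (forall k, 0 <= p`_k) -> 0 <= pval p l.
Proof.
move=> l0 hp; apply: sumr_ge0 => k _; apply: mulr_ge0; last exact: exprn_ge0.
exact: Re_ge0c.
Qed.

Lemma poly_bound (p : {poly R[i]}) P (l : R) : islin P -> 0 <= l -> (forall y, hn (P y) <= l * hn y) ->
  (forall k, 0 <= p`_k) -> forall x, hn (poly_op p P x) <= pval p l * hn x.
Proof.
move=> hP l0 hb hp x; rewrite /poly_op /pval mulr_suml.
apply: le_trans (hnorm_sum _ _) _; apply: ler_sum => k _.
rewrite {1}(ge0_rc (hp k)) hnormZ ger0_norm ?Re_ge0c // -mulrA ler_wpM2l ?Re_ge0c //.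
elim: (nat_of_ord k) => [|j IH]; first by rewrite expr0 mul1r.
rewrite iterS; apply: le_trans (hb _) _.
by rewrite exprSr [_ ^+ j * l]mulrC -mulrA ler_wpM2l.
Qed.

Arguments poly_bound {p P l}.
End Aux.

Arguments eigen {R H hs P x0}.
Arguments bl_ball {R H hs T}.
Arguments opnorm_bound {R H hs T M}.
Arguments opnorm_ub {R H hs T M}.
Arguments poly_eig {R H p P x0 l}.
Arguments poly_bound {R H hs p P l}.
Theorem proposition2p12 (R : realType) (H : lmodType R[i]) (hs : hilbert H)
  (P : H -> H) (p : nat -> {poly R[i]}) (S : H -> H) :
  bounded_linear hs P -> positive_op hs P ->
  (forall (n k : nat), 0 <= (p n)`_k) ->
  bounded_linear hs S ->
  (forall e : R, 0 < e -> exists N : nat, forall n : nat, (N <= n)%N ->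
      opnorm hs (fun x => poly_op (p n) P x - S x) < e) ->
  property_N hs P -> property_N hs S.
Proof.
move=> hPb hpos hp hSb hconv [x0 [hx0 hPx0]].
have hPx := eigen hPb hpos hx0 hPx0.
move: hPx0 hPx; set l := opnorm hs P => hPx0 hPx.
have l0 : 0 <= l by rewrite -hPx0 hnorm_ge0.
have [MP hMP] := bl_ball hPb.
have hbP := opnorm_bound hPb.1 hMP.
have [MS hMS] := bl_ball hSb.
exists x0; split => //.
apply/le_anti/andP; split; first by apply: (opnorm_ub hMS); rewrite hx0.
apply/ler_addgt0Pr => e e0.
have [N hN] := hconv (e / 2) (divr_gt0 e0 (ltr0Sn _ 1)).
have hD := hN N (leqnn N).
set v := pval (p N) l.
have hpb := poly_bound hPb.1 l0 hbP (hp N).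
have v0 : 0 <= v by apply: pval_ge0.
have hpb1 x : hnorm hs x <= 1 -> hnorm hs (poly_op (p N) P x) <= v.
  by move=> hx; apply: le_trans (hpb x) _; apply: ler_piMr.
have hDb x : hnorm hs x <= 1 -> hnorm hs (poly_op (p N) P x - S x) <= e / 2.
  move=> hx; apply/ltW/le_lt_trans/hD.
  apply: (opnorm_ub (M := v + MS)) hx => y hy.
  apply: le_trans (hnormD _ _) _; rewrite hnormN; apply: lerD; [exact: hpb1 | exact: hMS].
have h1 : opnorm hs S <= v + e / 2.
  apply: opnorm_le => x hx.
  have -> : S x = poly_op (p N) P x + - (poly_op (p N) P x - S x).
    by rewrite opprB addrC subrK.
  apply: le_trans (hnormD _ _) _; rewrite hnormN; apply: lerD; [exact: hpb1 | exact: hDb].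
have h2 : v <= hnorm hs (S x0) + e / 2.
  have : hnorm hs (poly_op (p N) P x0) = v.
    by rewrite (poly_eig hPb.1 hPx (hp N)) hnormZ hx0 mulr1 ger0_norm.
  have -> : poly_op (p N) P x0 = S x0 + (poly_op (p N) P x0 - S x0).
    by rewrite addrC subrK.
  move=> <-; apply: le_trans (hnormD _ _) _; apply: lerD => //; by apply: hDb; rewrite hx0 lexx.
lra.
Qed.
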